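(* For every $n\in\mathbb{N}$, the number of maximal sum-free sets in the elementary abelian group $\mathbb{Z}_3^n$ (of order $3^n$) is $3^n-1$.
   Context: A non-empty subset $S$ of a group $G$ is called sum-free if for all $s_1,s_2\in S$ (including the case $s_1=s_2$) one has $s_1s_2\notin S$. A maximal sum-free set in a finite group $G$ means a sum-free set of largest possible cardinality among all sum-free sets in $G$ (maximal by cardinality). *)

(* Defs.v *)
From mathcomp Require Import all_boot all_order all_algebra.
Set Implicit Arguments. Unset Strict Implicit. Unset Printing Implicit Defensive.
Import GRing.Theory.
Local Open Scope ring_scope.

Definition sum_free (G : finZmodType) (S : {set G}) : bool :=
  (S != set0) && [forall s1 in S, forall s2 in S, (s1 + s2) \notin S].

(* maximal sum-free = sum-free of largest possible cardinality *)
Definition max_sum_free (G : finZmodType) (S : {set G}) : bool :=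
  sum_free S && [forall T : {set G}, sum_free T ==> (#|T| <= #|S|)%N].

(* Main.v *)
Require Import Defs.
From mathcomp Require Import all_boot all_order all_algebra.
Import GRing.Theory.

Section Aux.
Local Open Scope ring_scope.

Lemma Z3_cases (z : 'Z_3) : [\/ z = 0, z = 1 | z = 2].
Proof. by case: z => [[|[|[|m]]] Hm]; [constructor 1|constructor 2|constructor 3|]; try apply/val_inj. Qed.
Lemma Z3_add3 (z : 'Z_3) : z + z + z = 0.
Proof. by case: (Z3_cases z) => ->; apply/val_inj. Qed.
Lemma Z3_sq (z : 'Z_3) : z != 0 -> z * z = 1.
Proof. by case: (Z3_cases z) => -> // _; apply/val_inj. Qed.

Variable n : nat.
Notation G := 'rV['Z_3]_n.

Lemma rv_add2 (a : G) : a + a = - a.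
Proof.
apply/matrixP => i j; rewrite !mxE; apply/eqP.
by rewrite -subr_eq0 opprK Z3_add3.
Qed.

Definition dot (x v : G) : 'Z_3 := (x *m v^T) 0 0.
Definition Sv (v : G) : {set G} := [set x | dot x v == 1].

Lemma dotD x y v : dot (x + y) v = dot x v + dot y v.
Proof. by rewrite /dot mulmxDl mxE. Qed.
Lemma dotN x v : dot (- x) v = - dot x v.
Proof. by rewrite /dot mulNmx mxE. Qed.
Lemma dotE x v : dot x v = \sum_j x 0 j * v 0 j.
Proof. by rewrite /dot mxE; apply: eq_bigr => j _; rewrite mxE. Qed.
Lemma dot_e i v : dot 'e_i v = v 0 i.
Proof.
rewrite dotE (bigD1 i) //= big1 ?addr0.
  by rewrite mxE !eqxx mul1r.
by move=> j /negbTE ji; rewrite mxE ji andbF mul0r.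
Qed.
Lemma dotZ (k : 'Z_3) x v : dot (k *: x) v = k * dot x v.
Proof. by rewrite /dot -scalemxAl mxE. Qed.

Lemma sfP (S : {set G}) : sum_free S -> forall x y, x \in S -> y \in S -> x + y \notin S.
Proof.
case/andP => _ /forallP H x y xS yS.
by move: (H x) => /implyP /(_ xS) /forallP /(_ y) /implyP /(_ yS).
Qed.

Lemma cardG : #|G| = (3 ^ n)%N.
Proof. by rewrite card_mx card_ord mul1n. Qed.

Definition cov (S : {set G}) a := S :|: [set x | x - a \in S] :|: [set x | x + a \in S].

Lemma cov_card (S : {set G}) a : a \in S ->
  (forall x y, x \in S -> y \in S -> x + y \notin S) ->
  #|cov S a| = (3 * #|S|)%N.
Proof.
move=> aS sf.
have cA : #|[set x | x - a \in S]| = #|S|.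
  exact: (@card_preimset _ (fun x => x - a) S (addIr _)).
have cB : #|[set x | x + a \in S]| = #|S|.
  exact: (@card_preimset _ (fun x => x + a) S (addIr _)).
have d1 : S :&: [set x | x - a \in S] = set0.
  apply/setP => x; rewrite !inE; apply/negbTE/andP => [[xS xaS]].
  by have := sf _ _ xaS aS; rewrite subrK xS.
have d2 : (S :|: [set x | x - a \in S]) :&: [set x | x + a \in S] = set0.
  apply/setP => x; rewrite !inE; apply/negbTE/andP => [[/orP [xS|xaS] xbS]].
    by have := sf _ _ xS aS; rewrite xbS.
  by have := sf _ _ xbS aS; rewrite -addrA rv_add2 xaS.
rewrite /cov cardsU d2 cards0 subn0 cardsU d1 cards0 subn0 cA cB.
by rewrite !mulSn mul0n addn0 addnA.
Qed.

Lemma rv_add3 (a : G) : a + a + a = 0.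
Proof. by rewrite rv_add2 addNr. Qed.

Lemma bound (S : {set G}) : sum_free S -> (3 * #|S| <= 3 ^ n)%N.
Proof.
move=> sf; case/andP: (sf) => /set0Pn [a aS] _.
by rewrite -(cov_card _ _ aS (sfP _ sf)) -cardG max_card.
Qed.

Lemma Sv_sf v : v != 0 -> sum_free (Sv v) /\ (3 * #|Sv v| = 3 ^ n)%N.
Proof.
move=> vnz.
have [i vi] : exists i, v 0 i != 0.
  case: (pickP (fun i => v 0 i != 0)) => [i vi|H]; first by exists i.
  move/eqP: vnz; case; apply/matrixP => r j; rewrite ord1 mxE.
  by move: (H j) => /negbFE/eqP.
pose u : G := v 0 i *: 'e_i.
have du : dot u v = 1 by rewrite dotZ dot_e Z3_sq.
have uS : u \in Sv v by rewrite inE du.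
have sf : forall x y, x \in Sv v -> y \in Sv v -> x + y \notin Sv v.
  move=> x y; rewrite !inE dotD => /eqP -> /eqP ->; by [].
split.
  apply/andP; split; first by apply/set0Pn; exists u.
  apply/forallP => x; apply/implyP => xS; apply/forallP => y; apply/implyP => yS.
  exact: sf.
have cT : cov (Sv v) u = [set: G].
  apply/setP => x; rewrite /cov !inE !dotD !dotN du.
  by case: (Z3_cases (dot x v)) => ->.
by rewrite -(cov_card _ _ uS sf) cT cardsT cardG.
Qed.

From mathcomp Require Import ring.

Lemma structure (S : {set G}) : sum_free S -> (3 * #|S| = 3 ^ n)%N -> exists v, S = Sv v.
Proof.
move=> sf0 card3; have sf := sfP _ sf0.
case/andP: (sf0) => /set0Pn [c cS] _.
have cover : forall a, a \in S -> forall x, [|| x \in S, x - a \in S | x + a \in S].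
  move=> a aS x.
  have : cov S a = setT.
    apply/eqP; rewrite eqEcard subsetT cardsT cardG cov_card //.
    by rewrite card3 leqnn.
  by move/setP/(_ x); rewrite !inE orbA => ->.
have neg : forall a b, a \in S -> b \in S -> - (a + b) \in S.
  move=> a b aS bS; case/or3P: (cover a aS (- (a + b))) => // H.
    rewrite (_ : - (a + b) - a = (a - b)) in H; last first.
      by rewrite opprD addrAC -opprD rv_add2 opprK.
    by have := sf _ _ H bS; rewrite subrK aS.
  rewrite (_ : - (a + b) + a = b + b) in H; last first.
    by rewrite rv_add2 opprD addrAC addNr add0r.
  by have := sf _ _ bS bS; rewrite H.
have three : forall a b d, a \in S -> b \in S -> d \in S -> a + b - d \in S.
  move=> a b d aS bS dS; have := neg _ _ (neg _ _ aS bS) dS.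
  by rewrite opprD opprK.
pose P x (k : 'Z_3) := x - k *: c + c \in S.
have Pex : forall x, exists k, P x k.
  move=> x; case/or3P: (cover c cS x) => H.
  - by exists 1; rewrite /P scale1r subrK.
  - exists 2; rewrite /P (_ : x - 2 *: c + c = x - c) //.
    by rewrite scaler_nat mulr2n opprD addrA subrK.
  - by exists 0; rewrite /P scale0r subr0.
have Puniq : forall x k l, P x k -> P x l -> k = l.
  move=> x k l Hk Hl.
  have e : x - l *: c + c = (x - k *: c + c) + (k - l) *: c.
    by apply/matrixP => i j; rewrite !mxE; ring.
  case: (Z3_cases (k - l)) => H.
  - by apply/eqP; rewrite -subr_eq0 H.
  - by rewrite /P e H scale1r in Hl; have := sf _ _ Hk cS; rewrite Hl.
  - 
    have e2 : x - k *: c + c = (x - l *: c + c) + c.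
      by rewrite e H scaler_nat mulr2n -[RHS]addrA rv_add3 addr0.
    by move: Hk; rewrite /P e2 => Hk'; have := sf _ _ Hl cS; rewrite Hk'.
have Padd : forall x y k l, P x k -> P y l -> P (x + y) (k + l).
  move=> x y k l Hk Hl; have := three _ _ _ Hk Hl cS; rewrite /P.
  suff -> : x + y - (k + l) *: c + c = x - k *: c + c + (y - l *: c + c) - c by [].
  by apply/matrixP => i j; rewrite !mxE; ring.
have Pnat : forall x k m, P x k -> P (x *+ m) (k *+ m).
  move=> x k m Hk; elim: m => [|m IH].
    by rewrite /P !mulr0n scale0r subr0 add0r.
  by rewrite !mulrS; apply: Padd.
have Pscal : forall x k (z : 'Z_3), P x k -> P (z *: x) (z * k).
  by move=> x k z Hk; rewrite -(natr_Zp z) scaler_nat mulr_natl; apply: Pnat.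
pose v : G := \row_i xchoose (Pex 'e_i).
have Psum : forall x, P x (dot x v).
  move=> x; rewrite {1}(row_sum_delta x) dotE.
  apply: (big_ind2 P).
  - by rewrite /P scale0r subr0 add0r.
  - by move=> ? ? ? ? ; apply: Padd.
  - by move=> j _; rewrite mxE; apply: Pscal; apply: xchooseP.
exists v; apply/setP => x; rewrite inE; apply/idP/eqP => [xS | dv].
  by apply: (Puniq x); [exact: Psum | rewrite /P scale1r subrK].
by have := Psum x; rewrite /P dv scale1r subrK.
Qed.
Lemma dot_char x v : dot x v = if x \in Sv v then 1 else if - x \in Sv v then 2 else 0.
Proof. by rewrite !inE dotN; case: (Z3_cases (dot x v)) => ->. Qed.

Lemma Sv_inj : injective Sv.
Proof.
move=> v w H; apply/matrixP => i j; rewrite ord1 -!dot_e.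
by rewrite (dot_char _ v) (dot_char _ w) H.
Qed.

Lemma dot0 x : dot x 0 = 0.
Proof. by rewrite /dot trmx0 mulmx0 mxE. Qed.

Lemma maxE : [set S : {set G} | max_sum_free S] = Sv @: [set v : G | v != 0].
Proof.
apply/setP => S; rewrite inE; apply/idP/imsetP.
  case/andP => sf /forallP mx.
  case/andP: (sf) => /set0Pn [a aS] _.
  have anz : a != 0.
    apply/eqP => a0; have := sfP _ sf _ _ aS aS; by rewrite a0 addr0 -a0 aS.
  have [sfa ca] := Sv_sf _ anz.
  have le1 := implyP (mx (Sv a)) sfa.
  have e3 : (3 * #|S| = 3 ^ n)%N.
    apply/eqP; rewrite eqn_leq bound //= -ca leq_mul2l /=; exact: le1.
  have [v Sv_e] := structure _ sf e3.
  exists v => //; rewrite inE; apply/eqP => v0.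
  by move: aS; rewrite Sv_e v0 inE dot0.
case=> v; rewrite inE => vnz ->.
have [sfv cv] := Sv_sf _ vnz.
apply/andP; split => //; apply/forallP => T; apply/implyP => sfT.
by rewrite -(leq_pmul2l (isT : (0 < 3)%N)) cv bound.
Qed.
End Aux.

Theorem mainTheorem2 (n : nat) :
  #|[set S : {set 'rV['Z_3]_n} | max_sum_free S]| = (3 ^ n - 1)%N.
Proof.
rewrite maxE card_imset; last exact: Sv_inj.
have -> : [set v : 'rV['Z_3]_n | v != 0%R] = [set~ 0%R] by apply/setP => v; rewrite !inE.
by rewrite cardsC1 cardG subn1.
Qed.
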